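(* For every strategy profile $s$ with $S_0(s)\vee S_1(s)$: $\ \mathsf{SAcBes}(s)\vee\mathsf{SBcAes}(s)\iff\mathsf{SPE}(s)$.
   Context: Let $P=\{A,B\}$ and $\mathrm{Choice}=\{d,r\}$; a payoff function is $f:P\to\mathbb{R}$. Strategy profiles are elements of the final coalgebra of $X\mapsto\mathbb{R}^P+P\times\mathrm{Choice}\times X\times X$ (finite or infinite trees $\langle f\rangle$ or $\langle p,c,s_d,s_r\rangle$, equality being bisimilarity). The payoff $\widehat{s}$ is the partial function given by $\widehat{\langle f\rangle}=f$, $\widehat{\langle p,d,s_d,s_r\rangle}=\widehat{s_d}$, $\widehat{\langle p,r,s_d,s_r\rangle}=\widehat{s_r}$. Convergence $\downarrow$: least predicate with $\downarrow(s)$ iff $s=\langle f\rangle$, or $s=\langle p,d,s_d,s_r\rangle\wedge\downarrow(s_d)$, or $s=\langle p,r,s_d,s_r\rangle\wedge\downarrow(s_r)$. Strong convergence $\Downarrow$: greatest predicate with $\Downarrow(s)$ iff $s=\langle f\rangle$, or $s=\langle p,c,s_d,s_r\rangle$ with $\downarrow(s),\Downarrow(s_d),\Downarrow(s_r)$. For a predicate $\Phi$, $\Box\Phi$ is the greatest predicate such that $\Box\Phi(s)$ iff $\Phi(s)$ and, whenever $s=\langle p,c,s_d,s_r\rangle$, $\Box\Phi(s_d)$ and $\Box\Phi(s_r)$. $\mathsf{PE}(s)$ holds iff $\Downarrow(s)$ and (if $s=\langle p,d,s_d,s_r\rangle$ then $\widehat{s_d}(p)\ge\widehat{s_r}(p)$)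 and (if $s=\langle p,r,s_d,s_r\rangle$ then $\widehat{s_r}(p)\ge\widehat{s_d}(p)$); $\mathsf{SPE}=\Box\,\mathsf{PE}$. Let $f_{0,1}=(A\mapsto0,B\mapsto1)$, $f_{1,0}=(A\mapsto1,B\mapsto0)$. $S_0,S_1$ are the greatest predicates with $S_0(s)$ iff $s=\langle A,c,\langle f_{0,1}\rangle,s'\rangle$ with $S_1(s')$, and $S_1(s)$ iff $s=\langle B,c,\langle f_{1,0}\rangle,s'\rangle$ with $S_0(s')$ (these are the profiles of the infinite alternating ''$0,1$-game''). $\mathsf{AcBes}$ is the least predicate such that $\mathsf{AcBes}(s)$ holds iff: whenever $s=\langle p,c,\langle f\rangle,s'\rangle$, then ($p=A$, $f=f_{0,1}$, $c=r$, $\mathsf{AcBes}(s')$) or ($p=B$, $f=f_{1,0}$, and ($c=d$ or $\mathsf{AcBes}(s')$)). $\mathsf{BcAes}$ is the least predicate such that $\mathsf{BcAes}(s)$ holds iff: whenever $s=\langle p,c,\langle f\rangle,s'\rangle$, then ($p=B$, $f=f_{1,0}$, $c=r$, $\mathsf{BcAes}(s')$) or ($p=A$, $f=f_{0,1}$, and ($c=d$ or $\mathsf{BcAes}(s')$)). $\mathsf{SAcBes}=\Box\,\mathsf{AcBes}$, $\mathsf{SBcAes}=\Box\,\mathsf{BcAes}$. *)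

(* Defs.v *)
From Stdlib Require Import Reals.
Open Scope R_scope.

Inductive Agent : Type := A | B.
Inductive Choice : Type := d | r.

Definition Payoff : Type := Agent -> R.

CoInductive StratProf : Type :=
| leaf : Payoff -> StratProf
| node : Agent -> Choice -> StratProf -> StratProf -> StratProf.

(* The partial payoff function  s^ , as a (functional) relation:
   payoff s f  means  s^ is defined at s and equals f. *)
Inductive payoff : StratProf -> Payoff -> Prop :=
| payoff_leaf : forall f, payoff (leaf f) f
| payoff_d : forall p sd sr f, payoff sd f -> payoff (node p d sd sr) f
| payoff_r : forall p sd sr f, payoff sr f -> payoff (node p r sd sr) f.

Inductive Conv : StratProf -> Prop :=
| conv_leaf : forall f, Conv (leaf f)
| conv_d : forall p sd sr, Conv sd -> Conv (node p d sd sr)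
| conv_r : forall p sd sr, Conv sr -> Conv (node p r sd sr).

CoInductive SConv : StratProf -> Prop :=
| sconv_leaf : forall f, SConv (leaf f)
| sconv_node : forall p c sd sr,
    Conv (node p c sd sr) -> SConv sd -> SConv sr -> SConv (node p c sd sr).

CoInductive Always (Phi : StratProf -> Prop) : StratProf -> Prop :=
| always_leaf : forall f, Phi (leaf f) -> Always Phi (leaf f)
| always_node : forall p c sd sr,
    Phi (node p c sd sr) -> Always Phi sd -> Always Phi sr ->
    Always Phi (node p c sd sr).

Definition PE (s : StratProf) : Prop :=
  SConv s /\
  match s with
  | leaf _ => True
  | node p d sd sr =>
      forall fd fr, payoff sd fd -> payoff sr fr -> fd p >= fr p
  | node p r sd sr =>
      forall fd fr, payoff sd fd -> payoff sr fr -> fr p >= fd p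
  end.

Definition SPE : StratProf -> Prop := Always PE.

Definition f01 : Payoff := fun a => match a with A => 0 | B => 1 end.
Definition f10 : Payoff := fun a => match a with A => 1 | B => 0 end.

CoInductive S0 : StratProf -> Prop :=
| S0_intro : forall c s', S1 s' -> S0 (node A c (leaf f01) s')
with S1 : StratProf -> Prop :=
| S1_intro : forall c s', S0 s' -> S1 (node B c (leaf f10) s').

Definition is_leaf (s : StratProf) : Prop :=
  match s with leaf _ => True | node _ _ _ _ => False end.

(* "A continues, B eventually stops" (least predicate).  The first two
   constructors cover the vacuous case where s is not of the form
   <p, c, <f>, s'>. *)
Inductive AcBes : StratProf -> Prop :=
| acbes_leaf : forall f, AcBes (leaf f)
| acbes_notleaf : forall p c t s', ~ is_leaf t -> AcBes (node p c t s')
| acbes_A : forall s', AcBes s' -> AcBes (node A r (leaf f01) s')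
| acbes_Bd : forall s', AcBes (node B d (leaf f10) s')
| acbes_Bc : forall c s', AcBes s' -> AcBes (node B c (leaf f10) s').

Inductive BcAes : StratProf -> Prop :=
| bcaes_leaf : forall f, BcAes (leaf f)
| bcaes_notleaf : forall p c t s', ~ is_leaf t -> BcAes (node p c t s')
| bcaes_B : forall s', BcAes s' -> BcAes (node B r (leaf f10) s')
| bcaes_Ad : forall s', BcAes (node A d (leaf f01) s')
| bcaes_Ac : forall c s', BcAes s' -> BcAes (node A c (leaf f01) s').

Definition SAcBes : StratProf -> Prop := Always AcBes.
Definition SBcAes : StratProf -> Prop := Always BcAes.

(* Main.v *)
Require Import Defs.
From Stdlib Require Import Reals Lra.
Open Scope R_scope.

Definition G s := S0 s \/ S1 s.

Lemma G_inv s : G s -> exists p c f s', s = node p c (leaf f) s' /\ G s' /\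
  ((p = A /\ f = f01) \/ (p = B /\ f = f10)).
Proof.
  intros [H|H]; inversion H; subst; do 4 eexists; split; try reflexivity;
  unfold G; split; auto.
Qed.

Lemma payoff_fun s f g : payoff s f -> payoff s g -> f = g.
Proof.
  intros H; revert g; induction H; intros g Hg; inversion Hg; subst; auto.
Qed.

Lemma f01_f10 : f01 <> f10.
Proof. intro H. assert (H1 := f_equal (fun h => h A) H). simpl in H1. lra. Qed.

Lemma conv_payoff s : G s -> Conv s -> payoff s f01 \/ payoff s f10.
Proof.
  intros HG HC; revert HG; induction HC; intros HG.
  - destruct (G_inv _ HG) as (?&?&?&?&E&_); discriminate.
  - destruct (G_inv _ HG) as (p'&c&f&s'&E&_&Hpf); injection E; intros; subst.
    destruct Hpf as [[_ ->]|[_ ->]]; [left|right]; constructor; constructor.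
  - destruct (G_inv _ HG) as (p'&c&f&s'&E&HG'&Hpf); injection E; intros; subst.
    destruct (IHHC HG'); [left|right]; constructor; auto.
Qed.

Lemma always_inv P p c sd sr : Always P (node p c sd sr) ->
  P (node p c sd sr) /\ Always P sd /\ Always P sr.
Proof. intro H; inversion H; auto. Qed.

Lemma always_here P s : Always P s -> P s.
Proof. intro H; destruct H; auto. Qed.

Lemma acbes_pay s : G s -> AcBes s -> payoff s f10 /\ Conv s.
Proof.
  intros HG H; revert HG; induction H; intros HG;
  destruct (G_inv _ HG) as (p'&c'&f'&s''&E&HG'&Hpf); try discriminate;
  injection E; intros; subst.
  - exfalso; apply H; exact I.
  - destruct (IHAcBes HG'); split; [apply payoff_r|apply conv_r]; auto.
  - destruct Hpf as [[? _]|_]; [discriminate|]. split; repeat constructor.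
  - destruct Hpf as [[? _]|_]; [discriminate|].
    destruct c'.
    + split; repeat constructor.
    + destruct (IHAcBes HG'); split; [apply payoff_r|apply conv_r]; auto.
Qed.

Lemma bcaes_pay s : G s -> BcAes s -> payoff s f01 /\ Conv s.
Proof.
  intros HG H; revert HG; induction H; intros HG;
  destruct (G_inv _ HG) as (p'&c'&f'&s''&E&HG'&Hpf); try discriminate;
  injection E; intros; subst.
  - exfalso; apply H; exact I.
  - destruct (IHBcAes HG'); split; [apply payoff_r|apply conv_r]; auto.
  - destruct Hpf as [_|[? _]]; [|discriminate]. split; repeat constructor.
  - destruct Hpf as [_|[? _]]; [|discriminate].
    destruct c'.
    + split; repeat constructor.
    + destruct (IHBcAes HG'); split; [apply payoff_r|apply conv_r]; auto.
Qed.

Lemma sconv_ac : forall s, G s -> Always AcBes s -> SConv s.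
Proof.
  cofix CIH; intros s HG HA.
  destruct (G_inv _ HG) as (p&c&f&s'&E&HG'&Hpf); subst.
  inversion HA; subst.
  apply sconv_node.
  - apply (acbes_pay _ HG); auto.
  - constructor.
  - apply CIH; auto.
Qed.

Lemma sconv_bc : forall s, G s -> Always BcAes s -> SConv s.
Proof.
  cofix CIH; intros s HG HA.
  destruct (G_inv _ HG) as (p&c&f&s'&E&HG'&Hpf); subst.
  inversion HA; subst.
  apply sconv_node.
  - apply (bcaes_pay _ HG); auto.
  - constructor.
  - apply CIH; auto.
Qed.

Lemma spe_ac : forall s, G s -> Always AcBes s -> SPE s.
Proof.
  cofix CIH; intros s HG HA.
  assert (HS := sconv_ac _ HG HA).
  destruct (G_inv _ HG) as (p&c&f&s'&E&HG'&Hpf); subst.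
  destruct (always_inv _ _ _ _ _ HA) as (Hh & _ & HA').
  assert (HAs := always_here _ _ HA').
  destruct (acbes_pay _ HG' HAs) as [Hp _].
  apply always_node.
  - split; auto.
    destruct Hpf as [[-> ->]|[-> ->]]; destruct c; intros fd fr Hd Hr;
      inversion Hd; subst;
      rewrite (payoff_fun _ _ _ Hr Hp); simpl; try lra.
    inversion Hh; subst. exfalso; match goal with H : ~ is_leaf _ |- _ => apply H; exact I end.
  - constructor. split; [constructor|exact I].
  - apply CIH; auto.
Qed.

Lemma spe_bc : forall s, G s -> Always BcAes s -> SPE s.
Proof.
  cofix CIH; intros s HG HA.
  assert (HS := sconv_bc _ HG HA).
  destruct (G_inv _ HG) as (p&c&f&s'&E&HG'&Hpf); subst.
  destruct (always_inv _ _ _ _ _ HA) as (Hh & _ & HA').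
  assert (HAs := always_here _ _ HA').
  destruct (bcaes_pay _ HG' HAs) as [Hp _].
  apply always_node.
  - split; auto.
    destruct Hpf as [[-> ->]|[-> ->]]; destruct c; intros fd fr Hd Hr;
      inversion Hd; subst;
      rewrite (payoff_fun _ _ _ Hr Hp); simpl; try lra.
    inversion Hh; subst. exfalso; match goal with H : ~ is_leaf _ |- _ => apply H; exact I end.
  - constructor. split; [constructor|exact I].
  - apply CIH; auto.
Qed.

Lemma pay10_ac s : G s -> SPE s -> payoff s f10 -> AcBes s.
Proof.
  intros HG HS Hp; remember f10 as g eqn:Eg; revert HG HS; induction Hp; intros HG HS;
  destruct (G_inv _ HG) as (p'&c'&f'&s''&E&HG'&Hpf); try discriminate;
  injection E; intros; subst.
  - inversion Hp; subst.
    destruct Hpf as [[? Hf]|[? Hf]]; subst.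
    + exfalso; apply f01_f10; congruence.
    + apply acbes_Bd.
  - destruct (always_inv _ _ _ _ _ HS) as (_ & _ & HS').
    assert (HA := IHHp eq_refl HG' HS').
    destruct Hpf as [[-> ->]|[-> ->]].
    + apply acbes_A; auto.
    + apply acbes_Bc; auto.
Qed.

Lemma pay01_bc s : G s -> SPE s -> payoff s f01 -> BcAes s.
Proof.
  intros HG HS Hp; remember f01 as g eqn:Eg; revert HG HS; induction Hp; intros HG HS;
  destruct (G_inv _ HG) as (p'&c'&f'&s''&E&HG'&Hpf); try discriminate;
  injection E; intros; subst.
  - inversion Hp; subst.
    destruct Hpf as [[? Hf]|[? Hf]]; subst.
    + apply bcaes_Ad.
    + exfalso; apply f01_f10; congruence.
  - destruct (always_inv _ _ _ _ _ HS) as (_ & _ & HS').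
    assert (HA := IHHp eq_refl HG' HS').
    destruct Hpf as [[-> ->]|[-> ->]].
    + apply bcaes_Ac; auto.
    + apply bcaes_B; auto.
Qed.

Lemma sconv_conv s : SConv s -> Conv s.
Proof. intro H; destruct H; [constructor|auto]. Qed.

Lemma spe_pay s : G s -> SPE s -> payoff s f01 \/ payoff s f10.
Proof.
  intros HG HS. apply conv_payoff; auto.
  apply sconv_conv. destruct (always_here _ _ HS); auto.
Qed.

Lemma f10_ne s : payoff s f01 -> payoff s f10 -> False.
Proof. intros H1 H2; apply f01_f10; exact (payoff_fun _ _ _ H1 H2). Qed.

Lemma back_ac : forall s, G s -> SPE s -> payoff s f10 -> SAcBes s.
Proof.
  cofix CIH; intros s HG HS Hp.
  assert (Hac := pay10_ac _ HG HS Hp).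
  destruct (G_inv _ HG) as (p&c&f&s'&E&HG'&Hpf); subst.
  destruct (always_inv _ _ _ _ _ HS) as (Hh & _ & HS').
  apply always_node; auto.
  - constructor; constructor.
  - apply CIH; auto.
    destruct c.
    + destruct (spe_pay _ HG' HS') as [H0|H0]; auto.
      inversion Hp; subst.
      destruct Hpf as [[? ?]|[? ?]]; subst;
      match goal with H: payoff (leaf _) _ |- _ => inversion H; subst end.
      * exfalso; apply f01_f10; congruence.
      * destruct Hh as [_ Hh]. specialize (Hh _ _ (payoff_leaf _) H0).
        simpl in Hh; lra.
    + inversion Hp; subst; auto.
Qed.

Lemma back_bc : forall s, G s -> SPE s -> payoff s f01 -> SBcAes s.
Proof.
  cofix CIH; intros s HG HS Hp.
  assert (Hac := pay01_bc _ HG HS Hp).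
  destruct (G_inv _ HG) as (p&c&f&s'&E&HG'&Hpf); subst.
  destruct (always_inv _ _ _ _ _ HS) as (Hh & _ & HS').
  apply always_node; auto.
  - constructor; constructor.
  - apply CIH; auto.
    destruct c.
    + destruct (spe_pay _ HG' HS') as [H0|H0]; auto.
      inversion Hp; subst.
      destruct Hpf as [[? ?]|[? ?]]; subst;
      match goal with H: payoff (leaf _) _ |- _ => inversion H; subst end.
      * destruct Hh as [_ Hh]. specialize (Hh _ _ (payoff_leaf _) H0).
        simpl in Hh; lra.
      * exfalso; apply f01_f10; congruence.
    + inversion Hp; subst; auto.
Qed.

Theorem mainTheorem12 (s : StratProf) :
  S0 s \/ S1 s -> (SAcBes s \/ SBcAes s <-> SPE s).
Proof.
  intros HG; split.
  - intros [H|H]; [apply spe_ac|apply spe_bc]; auto.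
  - intros HS. destruct (spe_pay _ HG HS) as [H|H].
    + right; apply back_bc; auto.
    + left; apply back_ac; auto.
Qed.
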